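(* Let $(V,\langle\cdot\,,\cdot\rangle_V)$ be an admissible module and $\Omega_1,\ldots,\Omega_l$ symmetric linear operators on $V$ (i.e. $\langle\Omega_kv,w\rangle_V=\langle v,\Omega_kw\rangle_V$ for all $v,w$) such that $\Omega_k^2=-\mathrm{Id}_V$ for $k=1,\ldots,l$ and $\Omega_k\Omega_j=-\Omega_j\Omega_k$ for all $k\neq j$. Then for any $w\in V$ with $\langle w,w\rangle_V=1$ there is a vector $\tilde w\in V$ satisfying $\langle\tilde w,\Omega_k\tilde w\rangle_V=0$ for all $k=1,\ldots,l$ and $\langle\tilde w,\tilde w\rangle_V=1$.
   Context: A scalar product is a real symmetric non-degenerate bilinear form. An admissible module is a real vector space $V$ which is a module over a Clifford algebra $\mathrm{Cl}_{r,s}$ (generated by $\mathbb R^{r,s}$ with $z^2=-\langle z,z\rangle\cdot1$), with representation $z\mapsto J_z$, together with a scalar product $\langle\cdot\,,\cdot\rangle_V$ satisfying $\langle J_zu,v\rangle_V=-\langle u,J_zv\rangle_V$ for all $z\in\mathbb R^{r,s}$, $u,v\in V$. *)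

(* Defs.v *)
(* V = 'rV[R]_n (finite-dimensional real vector space);
   linear operators are matrices acting on the right: A applied to u is u *m A. *)
From HB Require Import structures.
From mathcomp Require Import all_boot all_order all_algebra.
From mathcomp Require Import reals.
Set Implicit Arguments. Unset Strict Implicit. Unset Printing Implicit Defensive.
Import Order.TTheory GRing.Theory Num.Theory.
Local Open Scope ring_scope.

Definition sprod (R : pzRingType) (n : nat) (G : 'M[R]_n) (u v : 'rV[R]_n) : R :=
  (u *m G *m v^T) 0 0.

Definition scalar_product (R : realType) (n : nat) (G : 'M[R]_n) : Prop :=
  G^T = G /\ G \in unitmx.

Definition sig_sign (R : realType) (r s : nat) (i : 'I_(r + s)) : R :=
  if (i < r)%N then 1 else -1.

Definition rs_prod (R : realType) (r s : nat) (z z' : 'rV[R]_(r + s)) : R :=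
  \sum_(i < r + s) @sig_sign R r s i * z 0 i * z' 0 i.

Definition Jz (R : realType) (r s n : nat) (J : 'I_(r + s) -> 'M[R]_n)
  (z : 'rV[R]_(r + s)) : 'M[R]_n :=
  \sum_(i < r + s) z 0 i *: J i.

(* admissible module: Cl_{r,s}-module (J_z^2 = - <z,z> Id) with a scalar product
   G such that each J_z is skew-symmetric *)
Definition admissible (R : realType) (r s n : nat) (G : 'M[R]_n)
  (J : 'I_(r + s) -> 'M[R]_n) : Prop :=
  [/\ scalar_product G,
      (forall z : 'rV[R]_(r + s),
          @Jz R r s n J z *m @Jz R r s n J z = - (@rs_prod R r s z z) *: (1%:M : 'M[R]_n)) &
      (forall (z : 'rV[R]_(r + s)) (u v : 'rV[R]_n),
          sprod G (u *m @Jz R r s n J z) v = - sprod G u (v *m @Jz R r s n J z))].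

(* Main.v *)
Require Import Defs.
From HB Require Import structures.
From mathcomp Require Import all_boot all_order all_algebra.
From mathcomp Require Import reals.
From mathcomp Require Import ring.
Import Order.TTheory GRing.Theory Num.Theory.
Local Open Scope ring_scope.

Section Aux.
Variables (R : realType) (n : nat) (G : 'M[R]_n).

Lemma sprodDl u u' v : sprod G (u + u') v = sprod G u v + sprod G u' v.
Proof. by rewrite /sprod !mulmxDl mxE. Qed.
Lemma sprodZl (a : R) u v : sprod G (a *: u) v = a * sprod G u v.
Proof. by rewrite /sprod -!scalemxAl mxE. Qed.
Lemma sprodNl u v : sprod G (- u) v = - sprod G u v.
Proof. by rewrite /sprod !mulNmx mxE. Qed.
Lemma sprodDr u v v' : sprod G u (v + v') = sprod G u v + sprod G u v'.
Proof. by rewrite /sprod linearD /= mulmxDr mxE. Qed.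
Lemma sprodZr (a : R) u v : sprod G u (a *: v) = a * sprod G u v.
Proof. by rewrite /sprod linearZ /= -scalemxAr mxE. Qed.
Lemma sprodNr u v : sprod G u (- v) = - sprod G u v.
Proof. by rewrite /sprod linearN /= mulmxN mxE. Qed.

Definition symop (O : 'M[R]_n) :=
  forall u v, sprod G (u *m O) v = sprod G u (v *m O).

Lemma step_zero (O : 'M[R]_n) (Os : symop O) (O2 : O *m O = - (1%:M)) w :
  let p := sprod G w w in let x := sprod G w (w *m O) in
  let m := Num.sqrt (p ^+ 2 + x ^+ 2) in
  let wt := (p + m) *: w + x *: (w *m O) in
  sprod G wt (wt *m O) = 0 /\
  sprod G wt wt = 2 * (p + m) * (p ^+ 2 + x ^+ 2).
Proof.
move=> p x m wt.
have hm : m ^+ 2 = p ^+ 2 + x ^+ 2.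
  by rewrite sqr_sqrtr // addr_ge0 // sqr_ge0.
have e1 : sprod G (w *m O) w = x by rewrite Os.
have e2 : sprod G (w *m O) (w *m O) = - p.
  by rewrite Os -mulmxA O2 mulmxN mulmx1 sprodNr.
have eO : wt *m O = (p + m) *: (w *m O) - x *: w.
  by rewrite /wt mulmxDl -!scalemxAl -mulmxA O2 mulmxN mulmx1 scalerN.
rewrite eO /wt !(sprodDl, sprodDr, sprodZl, sprodZr, sprodNl, sprodNr) e1 e2 -/p -/x.
split.
  have -> : (p + m) * ((p + m) * x) + (p + m) * - (x * p) +
    (x * ((p + m) * - p) + x * - (x * x)) = x * (m ^+ 2 - p ^+ 2 - x ^+ 2) by ring.
  by rewrite hm; ring.
have -> : (p + m) * ((p + m) * p) + (p + m) * (x * x) +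
   (x * ((p + m) * x) + x * (x * - p)) =
   2 * (p + m) * (p ^+ 2 + x ^+ 2) + p * (m ^+ 2 - p ^+ 2 - x ^+ 2) by ring.
by rewrite hm; ring.
Qed.

Lemma step_keep (O Oj : 'M[R]_n) (Os : symop O) (O2 : O *m O = - (1%:M))
  (ac : O *m Oj = - (Oj *m O)) w (a b : R) :
  sprod G w (w *m Oj) = 0 ->
  let wt := a *: w + b *: (w *m O) in sprod G wt (wt *m Oj) = 0.
Proof.
move=> h0 wt.
have ac' : Oj *m O = - (O *m Oj) by rewrite ac opprK.
have e1 : sprod G (w *m O) (w *m Oj) = - sprod G w (w *m O *m Oj).
  by rewrite Os -mulmxA ac' mulmxN sprodNr mulmxA.
have e2 : sprod G (w *m O) (w *m O *m Oj) = 0.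
  rewrite Os -!mulmxA ac' mulmxN (mulmxA O O Oj) O2 mulNmx mul1mx opprK.
  exact: h0.
rewrite /wt mulmxDl -!scalemxAl.
rewrite !(sprodDl, sprodDr, sprodZl, sprodZr) e1 e2 h0; ring.
Qed.

End Aux.

Theorem lemma2p9 (R : realType) (r s n l : nat) (G : 'M[R]_n)
  (J : 'I_(r + s) -> 'M[R]_n) (Om : 'I_l -> 'M[R]_n) :
  admissible G J ->
  (forall (k : 'I_l) (u v : 'rV[R]_n), sprod G (u *m Om k) v = sprod G u (v *m Om k)) ->
  (forall k : 'I_l, Om k *m Om k = - (1%:M : 'M[R]_n)) ->
  (forall k j : 'I_l, k != j -> Om k *m Om j = - (Om j *m Om k)) ->
  forall w : 'rV[R]_n, sprod G w w = 1 ->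
  exists wt : 'rV[R]_n,
    (forall k : 'I_l, sprod G wt (wt *m Om k) = 0) /\ sprod G wt wt = 1.
Proof.
move=> _ Os O2 ac w hw.
have ind : forall m, (m <= l)%N -> exists v : 'rV[R]_n,
   0 < sprod G v v /\ (forall k : 'I_l, (k < m)%N -> sprod G v (v *m Om k) = 0).
  elim=> [_|m IH lm].
    by exists w; split=> [|k]; rewrite ?hw ?ltr01.
  have [v [vp vk]] := IH (ltnW lm).
  pose k0 := Ordinal lm.
  have /= [z1 z2] := @step_zero R n G _ (Os k0) (O2 k0) v.
  eexists; split; first last.
  move=> k; rewrite ltnS leq_eqVlt => /orP [/eqP ek|kl].
    have -> : k = k0 by apply: val_inj.
    exact: z1.
  apply: step_keep; [exact: Os|exact: O2| |exact: vk].
  apply: ac; apply/eqP => /(congr1 val) /= ek.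
  by move: kl; rewrite ek ltnn.
  rewrite z2 mulr_gt0 // ?mulr_gt0 //.
    - by rewrite ltr_wpDr // sqrtr_ge0.
    - by rewrite ltr_wpDr ?sqr_ge0 // exprn_gt0.
have [v [vp vk]] := ind l (leqnn l).
exists ((Num.sqrt (sprod G v v))^-1 *: v); split.
  by move=> k; rewrite -scalemxAl sprodZl sprodZr vk ?ltn_ord // !mulr0.
rewrite sprodZl sprodZr mulrA -expr2 exprVn sqr_sqrtr ?ltW // mulVf //.
by rewrite gt_eqF.
Qed.
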